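(* Fix $\lambda>0$ and let $M_\lambda$ be as in the context. Then $M_\lambda'(x)=0$ for $0<x<1$ and for $1<x<2$, and for all $x>1$, \[ M'_{\lambda}(x+1)=\frac{\int_1^x\lambda\sinh(\lambda t)M'_{\lambda}(t)\,dt+\lambda\sinh(\lambda)}{\cosh(\lambda x)-1}. \]
   Context: For $\lambda>0$, $M_\lambda:[0,\infty)\to\mathbb R$ is defined by $M_\lambda(x)=0$ for $0\le x\le1$ and, for all $x>0$, $M_{\lambda}(x+1)=\int_0^x\frac{\lambda e^{-\lambda t}}{1-e^{-\lambda x}}\bigl(M_{\lambda}(t)+M_{\lambda}(x-t)\bigr)\,dt+1$. This determines $M_\lambda$ uniquely, interval by interval. $M_\lambda(x)$ is the expected number of unit intervals at saturation in the parking process on $(0,x)$ in which left endpoints are drawn from the truncated exponential density $\lambda e^{-\lambda t}/(1-e^{-\lambda(x-1)})$ on $(0,x-1)$, and overlapping candidates are discarded. *)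

(* Defs.v *)
From Stdlib Require Import Reals.
From Coquelicot Require Import Coquelicot.
Open Scope R_scope.

(* Values of M at
   negative arguments are irrelevant. *)
Definition M_spec (lam : R) (M : R -> R) : Prop :=
  (forall x, 0 <= x <= 1 -> M x = 0) /\
  (forall x, 0 < x ->
     is_RInt (fun t => lam * exp (- lam * t) / (1 - exp (- lam * x))
                        * (M t + M (x - t)))
             0 x (M (x + 1) - 1)).

(* Main.v *)
Require Import Defs.
From Stdlib Require Import Reals Lra.
From Coquelicot Require Import Coquelicot.
Open Scope R_scope.

Lemma cont_plus (f g : R -> R) x : continuous f x -> continuous g x -> continuous (fun t => f t + g t) x.
Proof. intros; apply (continuous_plus f g); auto. Qed.
Lemma cont_minus (f g : R -> R) x : continuous f x -> continuous g x -> continuous (fun t => f t - g t) x.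
Proof. intros; apply (continuous_minus f g); auto. Qed.
Lemma cont_mult (f g : R -> R) x : continuous f x -> continuous g x -> continuous (fun t => f t * g t) x.
Proof. intros; apply (continuous_mult f g); auto. Qed.
Lemma cont_div (f g : R -> R) x : continuous f x -> continuous g x -> g x <> 0 -> continuous (fun t => f t / g t) x.
Proof. intros; apply (cont_mult f (fun t => / g t)); auto. apply continuous_Rinv_comp; auto. Qed.

Lemma is_RInt_zero_val (f : R -> R) a b l : is_RInt f a b l ->
  (forall x, Rmin a b < x < Rmax a b -> f x = 0) -> l = 0.
Proof.
  intros Hf Hz.
  apply is_RInt_ext with (g := fun _ => 0) in Hf; [|intros; apply Hz; auto].
  pose proof (is_RInt_const a b 0) as Hc.
  rewrite <- (is_RInt_unique _ _ _ _ Hf), (is_RInt_unique _ _ _ _ Hc).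
  change ((b-a)*0 = 0); ring.
Qed.

Lemma is_RInt_zero (f : R -> R) a b :
  (forall x, Rmin a b < x < Rmax a b -> f x = 0) -> is_RInt f a b 0.
Proof.
  intros Hz. apply is_RInt_ext with (f := fun _ => 0).
  intros; symmetry; apply Hz; auto.
  pose proof (is_RInt_const a b 0) as Hc.
  match type of Hc with is_RInt _ _ _ ?v =>
    assert (E : v = 0) by (change ((b-a)*0=0); ring); rewrite E in Hc end.
  exact Hc.
Qed.

Section Main.
Variable lam : R.
Variable M : R -> R.
Hypothesis Hlam : 0 < lam.
Hypothesis H0 : forall x, 0 <= x <= 1 -> M x = 0.
Hypothesis Hrec : forall x, 0 < x ->
  is_RInt (fun t => lam * exp (- lam * t) / (1 - exp (- lam * x)) * (M t + M (x - t)))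
    0 x (M (x + 1) - 1).

Lemma M_one z : 1 < z <= 2 -> M z = 1.
Proof.
  intros Hz. set (x := z - 1).
  assert (Hx : 0 < x) by (unfold x; lra).
  pose proof (Hrec x Hx) as H.
  apply is_RInt_zero_val in H.
  - replace z with (x + 1) by (unfold x; ring). lra.
  - intros t Ht. rewrite Rmin_left in Ht by lra. rewrite Rmax_right in Ht by lra.
    rewrite (H0 t) by (unfold x in *; lra). rewrite (H0 (x - t)) by (unfold x in *; lra). ring.
Qed.

Definition Mh s := if Rle_dec s 1 then 1 else M s.

Lemma Mh_gt1 s : 1 < s -> Mh s = M s.
Proof. intros; unfold Mh; destruct (Rle_dec s 1); lra. Qed.

Lemma Mh_lt2 s : s < 2 -> Mh s = 1.
Proof. intros; unfold Mh; destruct (Rle_dec s 1); auto. apply M_one; lra. Qed.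

Lemma Mh_cont_lt2 s : s < 2 -> continuous Mh s.
Proof.
  intros Hs. apply continuous_ext_loc with (g := fun _ => 1); [|apply continuous_const].
  apply (locally_interval _ s m_infty 2); simpl; auto.
  intros y _ Hy; symmetry; apply Mh_lt2; auto.
Qed.

Lemma Mh_M_loc s : 1 < s -> locally s (fun y => Mh y = M y).
Proof.
  intros Hs. apply (locally_interval _ s 1 p_infty); simpl; auto.
  intros y Hy _; apply Mh_gt1; auto.
Qed.

Lemma M_cont_of_Mh s : 1 < s -> continuous Mh s -> continuous M s.
Proof. intros Hs Hc. apply continuous_ext_loc with (g := Mh); auto. apply Mh_M_loc; auto. Qed.

Definition MC (Y : R) := forall z, z < Y -> continuous Mh z.

Lemma ex_int Y (c : R -> R) : MC Y -> (forall t, continuous c t) ->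
  forall y, 0 <= y < Y -> ex_RInt (fun t => c t * M t) 0 y.
Proof.
  intros HY Hc y Hy.
  assert (Z : forall y', 0 <= y' <= 1 -> ex_RInt (fun t => c t * M t) 0 y').
  { intros y' Hy'. apply ex_RInt_ext with (f := fun _ => 0); [|apply ex_RInt_const].
    intros t Ht. rewrite Rmin_left in Ht by lra. rewrite Rmax_right in Ht by lra.
    cbv beta; rewrite H0 by lra. now rewrite Rmult_0_r. }
  destruct (Rle_dec y 1) as [Hy1|Hy1]. { apply Z; lra. }
  apply (ex_RInt_Chasles (fun t => c t * M t) 0 1 y). { apply Z; lra. }
  apply ex_RInt_ext with (f := fun t => c t * Mh t).
  { intros t Ht. rewrite Rmin_left in Ht by lra. rewrite Rmax_right in Ht by lra.
    rewrite Mh_gt1 by lra. auto. }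
  apply (@ex_RInt_continuous R_CompleteNormedModule). intros z Hz.
  rewrite Rmin_left in Hz by lra. rewrite Rmax_right in Hz by lra.
  apply cont_mult; auto. apply HY; lra.
Qed.

Definition I (c : R -> R) x := RInt (fun t => c t * M t) 0 x.

Lemma I_loc Y c : MC Y -> (forall t, continuous c t) -> forall x, 0 < x < Y ->
  locally x (fun z => is_RInt (fun t => c t * M t) 0 z (I c z)).
Proof.
  intros HY Hc x Hx. apply (locally_interval _ x 0 Y); simpl; try lra.
  intros z Hz1 Hz2. unfold I; apply (@RInt_correct R_CompleteNormedModule). apply (ex_int Y); auto; lra.
Qed.

Lemma I_cont Y c : MC Y -> (forall t, continuous c t) -> forall x, 0 < x < Y ->
  continuous (I c) x.
Proof. intros. apply (continuous_RInt_1 (fun t => c t * M t) 0 x). apply (I_loc Y); auto. Qed.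

Lemma I_der Y c : MC Y -> (forall t, continuous c t) -> forall x, 1 < x < Y ->
  is_derive (I c) x (c x * M x).
Proof.
  intros HY Hc x Hx. apply (is_derive_RInt (fun t => c t * M t) (I c) 0 x).
  apply (I_loc Y); auto; lra.
  apply cont_mult; auto. apply M_cont_of_Mh; [lra|]. apply HY; lra.
Qed.


Definition ea t := lam * exp (- lam * t).
Definition eb t := lam * exp (lam * t).

Lemma ea_cont t : continuous ea t.
Proof. apply (@ex_derive_continuous R_AbsRing R_NormedModule). unfold ea. auto_derive. auto. Qed.
Lemma eb_cont t : continuous eb t.
Proof. apply (@ex_derive_continuous R_AbsRing R_NormedModule). unfold eb. auto_derive. auto. Qed.

Lemma E_lt1 x : 0 < x -> exp (- lam * x) < 1.
Proof. intros. rewrite <- exp_0. apply exp_increasing. nra. Qed.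

Lemma repr x : 0 < x -> ex_RInt (fun t => ea t * M t) 0 x -> ex_RInt (fun t => eb t * M t) 0 x ->
  (M (x+1) - 1) * (1 - exp (- lam * x)) = I ea x + exp (- lam * x) * I eb x.
Proof.
  intros Hx HA HB.
  assert (HE : 1 - exp (- lam * x) <> 0) by (pose proof (E_lt1 x Hx); lra).
  pose proof (is_RInt_scal _ _ _ (1 - exp (- lam * x)) _ (Hrec x Hx)) as H1.
  apply (@RInt_correct R_CompleteNormedModule) in HA.
  apply (@RInt_correct R_CompleteNormedModule) in HB.
  apply is_RInt_swap in HB.
  pose proof (is_RInt_comp_lin (fun t => eb t * M t) (-1) x 0 x) as HC.
  replace (-1 * 0 + x) with x in HC by ring. replace (-1*x+x) with 0 in HC by ring.
  specialize (HC _ HB).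
  apply (is_RInt_scal _ _ _ (- exp (- lam * x))) in HC.
  pose proof (is_RInt_plus _ _ _ _ _ _ HA HC) as H2.
  apply is_RInt_ext with (g := fun t => scal (1 - exp (- lam * x)) (lam * exp (- lam * t) / (1 - exp (- lam * x)) * (M t + M (x - t)))) in H2.
  - pose proof (is_RInt_unique _ _ _ _ H1) as U1. pose proof (is_RInt_unique _ _ _ _ H2) as U2.
    pose proof (eq_trans (eq_sym U1) U2) as U. clear U1 U2. rename U into U2. unfold scal, plus, opp, mult in U2; simpl in U2.
    unfold I. transitivity ((1 - exp (- lam * x)) * (M (x + 1) - 1)); [ring|].
    assert (Hfin : forall p q e : R, p + - e * - q = p + e * q) by (intros; ring).
    exact (eq_trans U2 (Hfin _ _ _)).
  - intros t _. unfold scal, plus, opp, mult; simpl. unfold mult; simpl.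
    replace (-1 * t + x) with (x - t) by ring. unfold ea, eb.
    assert (Ee : exp (- lam * x) * exp (lam * (x - t)) = exp (- lam * t)).
    { rewrite <- exp_plus. f_equal. ring. }
    field_simplify; auto. rewrite <- Ee. field_simplify; auto.
Qed.


Definition Q s := 1 + (I ea s + exp (- lam * s) * I eb s) / (1 - exp (- lam * s)).

Lemma M_Q Y : MC Y -> forall w, 1 < w < Y + 1 -> M w = Q (w - 1).
Proof.
  intros HY w Hw. set (s := w - 1).
  assert (Hs : 0 < s < Y) by (unfold s; lra).
  pose proof (repr s (proj1 Hs) (ex_int Y ea HY ea_cont s ltac:(lra))
               (ex_int Y eb HY eb_cont s ltac:(lra))) as R.
  replace (s + 1) with w in R by (unfold s; ring).
  pose proof (E_lt1 s (proj1 Hs)).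
  unfold Q. rewrite <- R. field. lra.
Qed.

Lemma expl_cont k x : continuous (fun s => exp (k * s)) x.
Proof. apply (@ex_derive_continuous R_AbsRing R_NormedModule). auto_derive. auto. Qed.

Lemma Q_cont Y : MC Y -> forall s, 0 < s < Y -> continuous Q s.
Proof.
  intros HY s Hs. unfold Q.
  apply cont_plus. apply continuous_const.
  apply cont_div.
  - apply cont_plus. apply (I_cont Y); auto using ea_cont.
    apply cont_mult. apply (expl_cont (- lam)). apply (I_cont Y); auto using eb_cont.
  - apply cont_minus. apply continuous_const. apply (expl_cont (- lam)).
  - pose proof (E_lt1 s (proj1 Hs)). lra.
Qed.

Lemma MC_step Y : 2 <= Y -> MC Y -> MC (Y + 1).
Proof.
  intros HY2 HY z Hz. destruct (Rlt_dec z 2) as [Hz2|Hz2]. { apply Mh_cont_lt2; auto. }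
  apply continuous_ext_loc with (g := fun w => Q (w - 1)).
  - apply (locally_interval _ z 1 (Y + 1)); simpl; try lra.
    intros w Hw1 Hw2. rewrite Mh_gt1 by auto. symmetry; apply (M_Q Y); auto.
  - apply (continuous_comp (fun w => w - 1) Q).
    apply cont_minus. apply continuous_id. apply continuous_const.
    apply (Q_cont Y); auto; lra.
Qed.

Lemma MC_all z : continuous Mh z.
Proof.
  assert (H : forall n, MC (2 + INR n)).
  { induction n.
    - intros w Hw. apply Mh_cont_lt2. simpl in Hw. lra.
    - rewrite S_INR. replace (2 + (INR n + 1)) with ((2 + INR n) + 1) by ring.
      apply MC_step; auto. pose proof (pos_INR n); lra. }
  destruct (nfloor_ex (Rabs z) (Rabs_pos z)) as [n Hn].
  apply (H n). pose proof (Rle_abs z). lra.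
Qed.


Lemma MCY Y : MC Y.
Proof. intros z _; apply MC_all. Qed.

Lemma M_cont z : 1 < z -> continuous M z.
Proof. intros; apply M_cont_of_Mh; auto; apply MC_all. Qed.

Lemma I_cont' c x : (forall t, continuous c t) -> 0 < x -> continuous (I c) x.
Proof. intros; apply (I_cont (x + 1)); auto using MCY; lra. Qed.

Lemma I_der' c x : (forall t, continuous c t) -> 1 < x -> is_derive (I c) x (c x * M x).
Proof. intros; apply (I_der (x + 1)); auto using MCY; lra. Qed.

Lemma ex_int' c y : (forall t, continuous c t) -> 0 <= y -> ex_RInt (fun t => c t * M t) 0 y.
Proof. intros; apply (ex_int (y + 1)); auto using MCY; lra. Qed.

Lemma M_Q' w : 1 < w -> M w = Q (w - 1).
Proof. intros; apply (M_Q w); auto using MCY; lra. Qed.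

Definition D x := (lam * sinh (lam * x) * M x - lam / 2 * (I ea x + I eb x)) / (cosh (lam * x) - 1).

Lemma cosh_gt1 y : 0 < y -> cosh y - 1 > 0.
Proof.
  intros Hy. unfold cosh. rewrite exp_Ropp. set (u := exp y).
  assert (Hu : 1 < u) by (unfold u; rewrite <- exp_0; apply exp_increasing; auto).
  replace ((u + / u) / 2 - 1) with ((u-1)*(u-1)/(2*u)) by (field; lra).
  apply Rdiv_lt_0_compat; nra.
Qed.

Lemma Q_der x : 1 < x -> is_derive Q x (D x).
Proof.
  intros Hx. pose proof (E_lt1 x ltac:(lra)) as HE.
  pose proof (I_der' ea x ea_cont Hx) as Ha. pose proof (I_der' eb x eb_cont Hx) as Hb.
  pose proof (cosh_gt1 (lam * x) ltac:(nra)) as Hc.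
  unfold Q. auto_derive.
  - repeat split; try (eexists; eassumption). lra.
  - replace (Derive (fun x0 => I ea x0) x) with (ea x * M x) by (symmetry; apply is_derive_unique; exact Ha).
    replace (Derive (fun x0 => I eb x0) x) with (eb x * M x) by (symmetry; apply is_derive_unique; exact Hb).
    unfold D, ea, eb in *. unfold sinh, cosh in *.
    assert (Ex : exp (- lam * x) = / exp (lam * x)) by (rewrite <- exp_Ropp; f_equal; ring).
    rewrite exp_Ropp in *. rewrite Ex in *.
    assert (Hu : 1 < exp (lam * x)) by (rewrite <- exp_0; apply exp_increasing; nra).
    set (u := exp (lam * x)) in *. field. repeat split; nra.
Qed.


Lemma M_der x : 1 < x -> is_derive M (x + 1) (D x).
Proof.
  intros Hx.
  apply is_derive_ext_loc with (f := fun w => Q (w - 1)).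
  - apply (locally_interval _ (x + 1) 1 p_infty); simpl; try lra.
    intros w Hw _. symmetry; apply M_Q'; auto.
  - assert (HQ : is_derive Q (x + 1 - 1) (D x)) by (replace (x + 1 - 1) with x by ring; apply Q_der; auto).
    assert (Hl : is_derive (fun w : R => w - 1) (x + 1) 1) by (auto_derive; auto; ring).
    pose proof (is_derive_comp Q (fun w => w - 1) (x + 1) (D x) 1 HQ Hl) as Hc.
    match type of Hc with is_derive _ _ ?v =>
      replace v with (D x) in Hc by (symmetry; apply (scal_one (K:=R_AbsRing))) end.
    exact Hc.
Qed.

Lemma M_der01 x : 0 < x < 1 -> is_derive M x 0.
Proof.
  intros Hx. apply is_derive_ext_loc with (f := fun _ => 0).
  - apply (locally_interval _ x 0 1); simpl; try lra.
    intros w Hw1 Hw2. symmetry; apply H0; simpl in *; lra.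
  - apply (is_derive_const (K := R_AbsRing) (0:R)).
Qed.

Lemma M_der12 x : 1 < x < 2 -> is_derive M x 0.
Proof.
  intros Hx. apply is_derive_ext_loc with (f := fun _ => 1).
  - apply (locally_interval _ x 1 2); simpl; try lra.
    intros w Hw1 Hw2. symmetry; apply M_one; simpl in *; lra.
  - apply (is_derive_const (K := R_AbsRing) (1:R)).
Qed.

Lemma DM12 t : 1 < t < 2 -> Derive M t = 0.
Proof. intros; apply is_derive_unique, M_der12; auto. Qed.

Lemma DM2 t : 2 < t -> Derive M t = D (t - 1).
Proof.
  intros. apply is_derive_unique. replace t with ((t - 1) + 1) at 1 by ring.
  apply M_der; lra.
Qed.


Definition Dh s := (lam * sinh (lam * s) * Mh s - lam / 2 * (I ea s + I eb s)) / (cosh (lam * s) - 1).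
Definition gh t := lam * sinh (lam * t) * Dh (t - 1).
Definition f t := lam * sinh (lam * t) * Derive M t.

Lemma sinh_cont x : continuous (fun t => sinh (lam * t)) x.
Proof. apply (@ex_derive_continuous R_AbsRing R_NormedModule). unfold sinh. auto_derive. auto. Qed.
Lemma cosh_cont x : continuous (fun t => cosh (lam * t)) x.
Proof. apply (@ex_derive_continuous R_AbsRing R_NormedModule). unfold cosh. auto_derive. auto. Qed.

Lemma Dh_cont s : 0 < s -> continuous Dh s.
Proof.
  intros Hs. unfold Dh. apply cont_div.
  - apply cont_minus. apply cont_mult. apply cont_mult. apply continuous_const. apply sinh_cont.
    apply MC_all. apply cont_mult. apply continuous_const.
    apply cont_plus; apply I_cont'; auto using ea_cont, eb_cont.
  - apply cont_minus. apply cosh_cont. apply continuous_const.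
  - pose proof (cosh_gt1 (lam * s) ltac:(nra)). lra.
Qed.

Lemma gh_cont t : 1 < t -> continuous gh t.
Proof.
  intros Ht. unfold gh. apply cont_mult. apply cont_mult. apply continuous_const. apply sinh_cont.
  apply (continuous_comp (fun w => w - 1) Dh).
  apply cont_minus. apply continuous_id. apply continuous_const.
  apply Dh_cont; lra.
Qed.

Lemma f_gh t : 2 < t -> f t = gh t.
Proof.
  intros Ht. unfold f, gh. rewrite DM2 by auto. unfold D, Dh. rewrite Mh_gt1 by lra. reflexivity.
Qed.

Lemma f_zero t : 1 < t < 2 -> f t = 0.
Proof. intros Ht. unfold f. rewrite DM12 by auto. ring. Qed.

Lemma f_cont t : 2 < t -> continuous f t.
Proof.
  intros Ht. apply continuous_ext_loc with (g := gh).
  - apply (locally_interval _ t 2 p_infty); simpl; try lra.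
    intros w Hw _. symmetry; apply f_gh; auto.
  - apply gh_cont; lra.
Qed.

Lemma f_int12 y : 1 < y <= 2 -> is_RInt f 1 y 0.
Proof.
  intros Hy. apply is_RInt_zero. intros t Ht.
  rewrite Rmin_left in Ht by lra. rewrite Rmax_right in Ht by lra. apply f_zero; lra.
Qed.

Lemma ex_f y : 1 < y -> ex_RInt f 1 y.
Proof.
  intros Hy. destruct (Rle_dec y 2) as [Hy2|Hy2].
  { eexists; apply f_int12; lra. }
  apply (ex_RInt_Chasles f 1 2 y). { eexists; apply f_int12; lra. }
  apply ex_RInt_ext with (f := gh).
  { intros t Ht. rewrite Rmin_left in Ht by lra. rewrite Rmax_right in Ht by lra.
    symmetry; apply f_gh; lra. }
  apply (@ex_RInt_continuous R_CompleteNormedModule). intros z Hz.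
  rewrite Rmin_left in Hz by lra. rewrite Rmax_right in Hz by lra.
  apply gh_cont; lra.
Qed.


Definition K y := lam * sinh (lam * y) * M y - lam * sinh lam - lam / 2 * (I ea y + I eb y).

Lemma I_12 c F y : (forall t, is_derive F t (c t)) -> (forall t, continuous c t) -> 1 < y <= 2 ->
  I c y = F y - F 1.
Proof.
  intros HF Hc Hy. unfold I.
  assert (H1 : is_RInt (fun t => c t * M t) 0 1 0).
  { apply is_RInt_zero. intros t Ht. rewrite Rmin_left in Ht by lra. rewrite Rmax_right in Ht by lra.
    rewrite H0 by lra. ring. }
  assert (H2 : is_RInt (fun t => c t * M t) 1 y (minus (F y) (F 1))).
  { apply is_RInt_ext with (f := c).
    { intros t Ht. rewrite Rmin_left in Ht by lra. rewrite Rmax_right in Ht by lra.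
      rewrite M_one by lra. now rewrite Rmult_1_r. }
    apply (@is_RInt_derive R_CompleteNormedModule); intros; auto. }
  pose proof (is_RInt_Chasles _ _ _ _ _ _ H1 H2) as H.
  apply (@is_RInt_unique R_CompleteNormedModule) in H. rewrite H.
  change (0 + (F y - F 1) = F y - F 1). ring.
Qed.

Lemma K_12 y : 1 < y <= 2 -> K y = 0.
Proof.
  intros Hy. unfold K.
  rewrite (I_12 ea (fun t => - exp (- lam * t))); auto using ea_cont.
  2: { intros t. auto_derive; auto. unfold ea; ring. }
  rewrite (I_12 eb (fun t => exp (lam * t))); auto using eb_cont.
  2: { intros t. auto_derive; auto. unfold eb; ring. }
  rewrite M_one by lra. unfold sinh.
  replace (- lam * y) with (- (lam * y)) by ring.
  replace (- lam * 1) with (- lam) by ring. replace (lam * 1) with lam by ring.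
  match goal with |- ?l = _ => change (@eq R l 0) end. field.
Qed.

Lemma K_cont y : 1 < y -> continuous K y.
Proof.
  intros Hy. unfold K. apply cont_minus. apply cont_minus.
  apply cont_mult. apply cont_mult. apply continuous_const. apply sinh_cont. apply M_cont; auto.
  apply continuous_const. apply cont_mult. apply continuous_const.
  apply cont_plus; apply I_cont'; auto using ea_cont, eb_cont; lra.
Qed.

Lemma K_der y : 2 < y -> is_derive K y (f y).
Proof.
  intros Hy.
  pose proof (I_der' ea y ea_cont ltac:(lra)) as Ha. pose proof (I_der' eb y eb_cont ltac:(lra)) as Hb.
  assert (HM : is_derive M y (D (y - 1))).
  { replace y with ((y - 1) + 1) at 1 by ring. apply M_der; lra. }
  unfold K, f, sinh. auto_derive.
  - repeat split; eexists; eassumption.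
  - replace (Derive (fun x0 => I ea x0) y) with (ea y * M y) by (symmetry; apply is_derive_unique; exact Ha).
    replace (Derive (fun x0 => I eb x0) y) with (eb y * M y) by (symmetry; apply is_derive_unique; exact Hb).
    unfold ea, eb. replace (- lam * y) with (- (lam * y)) by ring. change RinvImpl.Rinv with Rinv. change (Derive (fun x => M x) y) with (Derive M y). field.
Qed.

Lemma RInt_f_K y : 1 < y -> RInt f 1 y = K y.
Proof.
  intros Hy. destruct (Rle_dec y 2) as [Hy2|Hy2].
  { rewrite K_12 by lra. apply (@is_RInt_unique R_CompleteNormedModule). apply f_int12; lra. }
  set (h := fun t => RInt f 1 t - K t).
  assert (Hh2 : h 2 = 0).
  { unfold h. rewrite K_12 by lra. rewrite (@is_RInt_unique R_CompleteNormedModule f 1 2 0). ring.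
    apply f_int12; lra. }
  assert (Hloc : forall t, 1 < t -> locally t (fun z => is_RInt f 1 z (RInt f 1 z))).
  { intros t Ht. apply (locally_interval _ t 1 p_infty); simpl; try lra.
    intros z Hz _. apply (@RInt_correct R_CompleteNormedModule). apply ex_f; auto. }
  destruct (MVT_gen h 2 y (fun _ => 0)) as [c [_ Hc]].
  - rewrite Rmin_left by lra. rewrite Rmax_right by lra. intros t Ht.
    unfold h. replace 0 with (f t - f t) by ring.
    apply (is_derive_minus (fun t => RInt f 1 t) K).
    + apply (is_derive_RInt f (RInt f 1) 1 t). apply Hloc; lra. apply f_cont; lra.
    + apply K_der; lra.
  - rewrite Rmin_left by lra. rewrite Rmax_right by lra. intros t Ht.
    apply continuity_pt_filterlim. unfold h.
    apply (cont_minus (fun t => RInt f 1 t) K).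
    + apply (continuous_RInt_1 f 1 t). apply Hloc; lra.
    + apply K_cont; lra.
  - rewrite Hh2 in Hc. unfold h in Hc. lra.
Qed.

End Main.

Theorem mainTheorem7 (lam : R) (M : R -> R) :
  0 < lam -> M_spec lam M ->
  (forall x, 0 < x < 1 -> is_derive M x 0) /\
  (forall x, 1 < x < 2 -> is_derive M x 0) /\
  (forall x, 1 < x ->
     ex_RInt (fun t => lam * sinh (lam * t) * Derive M t) 1 x /\
     is_derive M (x + 1)
       ((RInt (fun t => lam * sinh (lam * t) * Derive M t) 1 x
         + lam * sinh lam) / (cosh (lam * x) - 1))).
Proof.
  intros Hlam [H0 Hrec].
  split; [|split].
  - intros x Hx. eapply M_der01; eauto.
  - intros x Hx. eapply M_der12; eauto.
  - intros x Hx. split.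
    + change (ex_RInt (f lam M) 1 x). eapply ex_f; eauto.
    + change (is_derive M (x + 1) ((RInt (f lam M) 1 x + lam * sinh lam) / (cosh (lam * x) - 1))).
      rewrite (RInt_f_K lam M Hlam H0 Hrec x Hx).
      replace ((K lam M x + lam * sinh lam) / (cosh (lam * x) - 1)) with (D lam M x).
      * eapply M_der; eauto.
      * unfold D, K. f_equal. ring.
Qed.
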